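(* Let $A,B\in\mathbb F^{n\times n}$ with $A$ Lyapunov regular and $B\in\mathcal C_{\mathcal L}(A)\cap\{A\}''_{\mathbb F}$, and let $C_1,\dots,C_m$ be the matrices of a minimal Hill representation of $\mathcal L_{A,B}$ (they lie in $\{A^*\}''_{\mathbb F}$). Assume $\operatorname{span}\{C_1,\dots,C_m,I_n\}=\{A^*\}''_{\mathbb F}$. Then $\ker L_{\mathbf R}\subseteq\ker M_{\mathbf R}$ for every finite collection $\mathbf R\subset\mathbb F^{n\times n}$. In particular this holds when $m=\dim\{A\}''_{\mathbb F}$.
   Context: $\mathbb F=\mathbb R$ or $\mathbb C$; $\otimes$ Kronecker product. $A$ Lyapunov regular: eigenvalues satisfy $\lambda_i+\bar\lambda_j\ne0$. $\mathcal L_Y(X)=XY+Y^*X$, $\mathcal L_{A,B}=\mathcal L_B\circ\mathcal L_A^{-1}$. $\{A\}''_{\mathbb F}$ bicommutant of $A$ in $\mathbb F^{n\times n}$; $\overline{\mathcal H}(A)=\{H\text{ Hermitian}:HA+A^*H\succeq0\}$, $\mathcal C_{\mathcal L}(A)=\{B:\overline{\mathcal H}(A)\subseteq\overline{\mathcal H}(B)\}$. Let $\mathcal L_{A,B}(V)=\sum_{k,l=1}^m\mathbb H_{kl}C_kVC_l^*$ be a minimal Hill representation (smallest possible $m$) with Hill matrix $\mathbb H$; under the hypotheses $\mathbb H$ is positive definite; fix an invertible $P\in\mathbb F^{m\times m}$ with $\mathbb H=P^*P$. Set $\mathbf C=\begin{bmatrix}C_1^*\\\vdots\\C_m^*\end{bmatrix}$,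 $L_R=\begin{bmatrix}R\\(P\otimes R)\mathbf C\end{bmatrix}$, $M_R=\begin{bmatrix}RB\\-(P\otimes RA)\mathbf C\end{bmatrix}$. For a finite collection $\mathbf R=\{R_1,\dots,R_k\}$ set $L_{\mathbf R}=[L_{R_1}\ \cdots\ L_{R_k}]$, $M_{\mathbf R}=[M_{R_1}\ \cdots\ M_{R_k}]$. *)

(* Defs.v *)
From HB Require Import structures.
From mathcomp Require Import all_boot all_order all_algebra.
From mathcomp Require Export mxtens.
Set Implicit Arguments. Unset Strict Implicit. Unset Printing Implicit Defensive.
Import Order.TTheory GRing.Theory Num.Theory.
Local Open Scope ring_scope.

(* The ambient field is an (abstract) numeric algebraically closed field C
   (playing the role of the complex numbers).  The scalar field F is
   F = C when [realF = false] and F = the real numbers of C when [realF = true]. *)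

Section Defs.
Variable C : numClosedFieldType.
Variable realF : bool.

Definition inF (x : C) : bool := ~~ realF || (x \is Num.real).

Definition mxF {p q} (M : 'M[C]_(p, q)) : Prop := forall i j, inF (M i j).

Definition mxstar {p q} (M : 'M[C]_(p, q)) : 'M[C]_(q, p) := map_mx Num.conj M^T.

Definition lyap_regular {n} (A : 'M[C]_n) : Prop :=
  forall l1 l2, eigenvalue A l1 -> eigenvalue A l2 -> l1 + Num.conj l2 != 0.

Definition lyap {n} (Y X : 'M[C]_n) : 'M[C]_n := X *m Y + mxstar Y *m X.

Definition lyap_inv {n} (A V : 'M[C]_n) : 'M[C]_n :=
  vec_mx (mxvec V *m invmx (lin_mx (lyap A))).

Definition lyapAB {n} (A B V : 'M[C]_n) : 'M[C]_n := lyap B (lyap_inv A V).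

Definition bicomm {n} (A X : 'M[C]_n) : Prop :=
  mxF X /\ forall Y : 'M[C]_n, mxF Y -> Y *m A = A *m Y -> X *m Y = Y *m X.

Definition hermitian {n} (H : 'M[C]_n) : Prop := mxstar H = H.

Definition psd {n} (M : 'M[C]_n) : Prop :=
  forall x : 'cV[C]_n, mxF x -> 0 <= (mxstar x *m M *m x) 0 0.

Definition Hbar {n} (A H : 'M[C]_n) : Prop :=
  mxF H /\ hermitian H /\ psd (lyap A H).

Definition CL {n} (A B : 'M[C]_n) : Prop := forall H, Hbar A H -> Hbar B H.

Definition hill_rep {n m} (Phi : 'M[C]_n -> 'M[C]_n)
    (H : 'M[C]_m) (Cs : 'I_m -> 'M[C]_n) : Prop :=
  mxF H /\ (forall k, mxF (Cs k)) /\
  forall V : 'M[C]_n, mxF V ->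
    Phi V = \sum_(k < m) \sum_(l < m) H k l *: (Cs k *m V *m mxstar (Cs l)).

Definition min_hill_rep {n m} (Phi : 'M[C]_n -> 'M[C]_n)
    (H : 'M[C]_m) (Cs : 'I_m -> 'M[C]_n) : Prop :=
  hill_rep Phi H Cs /\
  forall m' (H' : 'M[C]_m') (Cs' : 'I_m' -> 'M[C]_n), hill_rep Phi H' Cs' -> (m <= m')%N.

Definition in_span_CI {n m} (Cs : 'I_m -> 'M[C]_n) (X : 'M[C]_n) : Prop :=
  exists (c : 'I_m -> C) (d : C), (forall k, inF (c k)) /\ inF d /\
    X = \sum_(k < m) c k *: Cs k + d%:M.

Definition dimF_is {n} (S : 'M[C]_n -> Prop) (d : nat) : Prop :=
  exists Bs : 'I_d -> 'M[C]_n, (forall k, S (Bs k)) /\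
    (forall c : 'I_d -> C, (forall k, inF (c k)) ->
        \sum_(k < d) c k *: Bs k = 0 -> forall k, c k = 0) /\
    (forall X, S X -> exists c : 'I_d -> C, (forall k, inF (c k)) /\
        X = \sum_(k < d) c k *: Bs k).

(* bold C: the (m n) x n matrix stacking C_1^*, ..., C_m^* *)
Definition stackC {n m} (Cs : 'I_m -> 'M[C]_n) : 'M[C]_(m * n, n) :=
  \matrix_(r, c) mxstar (Cs (mxtens_unindex r).1) (mxtens_unindex r).2 c.

Definition LR {n m} (P : 'M[C]_m) (Cs : 'I_m -> 'M[C]_n) (R : 'M[C]_n)
  : 'M[C]_(n + m * n, n) := col_mx R ((P *t R) *m stackC Cs).

Definition MR {n m} (A B : 'M[C]_n) (P : 'M[C]_m) (Cs : 'I_m -> 'M[C]_n)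
    (R : 'M[C]_n) : 'M[C]_(n + m * n, n) :=
  col_mx (R *m B) (- ((P *t (R *m A)) *m stackC Cs)).

Definition LRs {n m k} (P : 'M[C]_m) (Cs : 'I_m -> 'M[C]_n)
    (Rs : 'I_k -> 'M[C]_n) := \mxrow_(j < k) LR P Cs (Rs j).

Definition MRs {n m k} (A B : 'M[C]_n) (P : 'M[C]_m) (Cs : 'I_m -> 'M[C]_n)
    (Rs : 'I_k -> 'M[C]_n) := \mxrow_(j < k) MR A B P Cs (Rs j).

End Defs.

(* Main.v *)
Set Warnings "-notation-overridden,-ambiguous-paths".
Require Import Defs.
From HB Require Import structures.
From mathcomp Require Import all_boot all_order all_algebra ring.
Import Order.TTheory GRing.Theory Num.Theory.
Local Open Scope ring_scope.
Set Implicit Arguments. Unset Strict Implicit. Unset Printing Implicit Defensive.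

Lemma mxstarE (C : numClosedFieldType) p q (X : 'M[C]_(p,q)) i j :
  mxstar X i j = (X j i)^*.
Proof. by rewrite !mxE. Qed.

Lemma mxstarK (C : numClosedFieldType) p q (X : 'M[C]_(p,q)) :
  mxstar (mxstar X) = X.
Proof. by apply/matrixP=> i j; rewrite !mxstarE conjCK. Qed.

Lemma mxstarM (C : numClosedFieldType) p q r (X : 'M[C]_(p,q)) (Y : 'M[C]_(q,r)) :
  mxstar (X *m Y) = mxstar Y *m mxstar X.
Proof. by rewrite /mxstar trmx_mul map_mxM. Qed.

Lemma mxstarD (C : numClosedFieldType) p q (X Y : 'M[C]_(p,q)) :
  mxstar (X + Y) = mxstar X + mxstar Y.
Proof. by apply/matrixP=> i j; rewrite !mxE rmorphD. Qed.

Lemma mxstarZ (C : numClosedFieldType) p q a (X : 'M[C]_(p,q)) :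
  mxstar (a *: X) = a^* *: mxstar X.
Proof. by apply/matrixP=> i j; rewrite !mxE rmorphM. Qed.

Lemma mxstar_sum (C : numClosedFieldType) p q (I : finType) (F : I -> 'M[C]_(p,q)) :
  mxstar (\sum_i F i) = \sum_i mxstar (F i).
Proof.
apply: (big_ind2 (fun a b => mxstar a = b)) => //.
  by apply/matrixP=> i j; rewrite !mxE rmorph0.
by move=> x1 x2 y1 y2 <- <-; rewrite mxstarD.
Qed.

Lemma mxstar_scalar (C : numClosedFieldType) n (d : C) :
  mxstar (d%:M : 'M_n) = (d^*)%:M.
Proof. by apply/matrixP=> i j; rewrite !mxE eq_sym rmorphMn. Qed.

Lemma inF_conj (C : numClosedFieldType) r (x : C) : inF r x -> inF r (x^*).
Proof. by rewrite /inF CrealJ. Qed.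

Lemma inF_add (C : numClosedFieldType) r (x y : C) : inF r x -> inF r y -> inF r (x + y).
Proof. by case: r; rewrite /inF //= => ??; apply: rpredD. Qed.

Lemma inF_mul (C : numClosedFieldType) r (x y : C) : inF r x -> inF r y -> inF r (x * y).
Proof. by case: r; rewrite /inF //= => ??; apply: rpredM. Qed.

Lemma inF_opp (C : numClosedFieldType) r (x : C) : inF r x -> inF r (- x).
Proof. by case: r; rewrite /inF //= realN. Qed.

Lemma inF_nat (C : numClosedFieldType) r k : inF r (k%:R : C).
Proof. by case: r; rewrite /inF //= realn. Qed.

Lemma inF0 (C : numClosedFieldType) r : inF r (0 : C).
Proof. by case: r; rewrite /inF //= real0. Qed.

Lemma inF1 (C : numClosedFieldType) r : inF r (1 : C).
Proof. by case: r; rewrite /inF //= real1. Qed.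

Lemma inF_sum (C : numClosedFieldType) r (I : finType) (F : I -> C) :
  (forall i, inF r (F i)) -> inF r (\sum_i F i).
Proof. move=> h; apply: (big_ind (fun x : C => inF r x)) => //; [exact: inF0 | exact: inF_add]. Qed.

Lemma inF_inv (C : numClosedFieldType) r (x : C) : inF r x -> inF r (x^-1).
Proof. by case: r; rewrite /inF //= => ?; rewrite realV. Qed.

Lemma mxF_star (C : numClosedFieldType) r p q (X : 'M[C]_(p,q)) :
  mxF r X -> mxF r (mxstar X).
Proof. by move=> h i j; rewrite mxstarE; apply: inF_conj. Qed.

Lemma mxF_mul (C : numClosedFieldType) r p q s (X : 'M[C]_(p,q)) (Y : 'M[C]_(q,s)) :
  mxF r X -> mxF r Y -> mxF r (X *m Y).
Proof. by move=> hX hY i j; rewrite mxE; apply: inF_sum => k; apply: inF_mul. Qed.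

Lemma mxF_add (C : numClosedFieldType) r p q (X Y : 'M[C]_(p,q)) :
  mxF r X -> mxF r Y -> mxF r (X + Y).
Proof. by move=> hX hY i j; rewrite mxE; apply: inF_add. Qed.

Lemma mxF_scalar (C : numClosedFieldType) r n (d : C) :
  inF r d -> mxF r (d%:M : 'M_n).
Proof. by move=> hd i j; rewrite mxE; case: (i == j); rewrite ?mulr1n ?mulr0n // inF0. Qed.

Lemma mxF_delta (C : numClosedFieldType) r p q (a : 'I_p) (b : 'I_q) :
  mxF r (delta_mx a b : 'M[C]_(p,q)).
Proof. by move=> i j; rewrite mxE inF_nat. Qed.

Lemma bicomm_star (C : numClosedFieldType) r n (A X : 'M[C]_n) :
  bicomm r A X -> bicomm r (mxstar A) (mxstar X).
Proof.
move=> [hX hc]; split; first exact: mxF_star.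
move=> Y hY hYA.
have h1 : mxstar Y *m A = A *m mxstar Y.
  by rewrite -[A]mxstarK -!mxstarM hYA.
have := hc _ (mxF_star hY) h1.
move=> /(congr1 (@mxstar _ _ _)); rewrite !mxstarM !mxstarK => ->//.
Qed.

Lemma bicomm_starK (C : numClosedFieldType) r n (A X : 'M[C]_n) :
  bicomm r (mxstar A) X -> bicomm r A (mxstar X).
Proof. by move=> /bicomm_star; rewrite mxstarK. Qed.

Lemma bicomm_self (C : numClosedFieldType) r n (A : 'M[C]_n) :
  mxF r A -> bicomm r A A.
Proof. by move=> hA; split => // Y _ ->. Qed.

Lemma bicomm_mul (C : numClosedFieldType) r n (A X Z : 'M[C]_n) :
  bicomm r A X -> bicomm r A Z -> bicomm r A (X *m Z).
Proof.
move=> [hX cX] [hZ cZ]; split; first exact: mxF_mul.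
by move=> Y hY hYA; rewrite -mulmxA cZ // !mulmxA cX.
Qed.

Lemma lyap_vec (C : numClosedFieldType) n (A X : 'M[C]_n) :
  mxvec X *m lin_mx (lyap A) = mxvec (lyap A X).
Proof.
have -> : lin_mx (lyap A) = lin_mx (mulmxr A \+ mulmx (mxstar A)) by [].
by rewrite mul_vec_lin.
Qed.

Lemma lyapYM (C : numClosedFieldType) n (A Y X : 'M[C]_n) :
  Y *m mxstar A = mxstar A *m Y -> lyap A (Y *m X) = Y *m lyap A X.
Proof. by move=> h; rewrite /lyap mulmxDr !mulmxA h. Qed.

Lemma lyap_invM (C : numClosedFieldType) n (A Y V : 'M[C]_n) :
  Y *m mxstar A = mxstar A *m Y -> lyap_inv A (Y *m V) = Y *m lyap_inv A V.
Proof.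
move=> hY; rewrite /lyap_inv; set M := lin_mx (lyap A).
case: (boolP (M \in unitmx)) => hM; last first.
  by rewrite (invmx_out hM) !lyap_vec !mxvecK lyapYM.
have inv : forall W, lyap A (vec_mx (mxvec W *m invmx M)) = W.
  move=> W; apply: (can_inj (@mxvecK _ _ _)).
  by rewrite -lyap_vec vec_mxK mulmxKV.
have inj : forall X1 X2, lyap A X1 = lyap A X2 -> X1 = X2.
  move=> X1 X2 h; apply: (can_inj (@mxvecK _ _ _)).
  by rewrite -(mulmxK hM (mxvec X1)) -(mulmxK hM (mxvec X2)) !lyap_vec h.
by apply: inj; rewrite inv lyapYM // inv.
Qed.

Lemma lyapAB_M (C : numClosedFieldType) n (A B Y V : 'M[C]_n) :
  Y *m mxstar A = mxstar A *m Y -> Y *m mxstar B = mxstar B *m Y ->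
  lyapAB A B (Y *m V) = Y *m lyapAB A B V.
Proof. by move=> hA hB; rewrite /lyapAB lyap_invM // lyapYM. Qed.

Lemma hill_subst (C : numClosedFieldType) r n m m' (Phi : 'M[C]_n -> 'M[C]_n)
    (H : 'M[C]_m) (Cs : 'I_m -> 'M[C]_n) (T : 'M[C]_(m, m')) (Cs' : 'I_m' -> 'M[C]_n) :
  hill_rep r Phi H Cs -> mxF r T -> (forall k, mxF r (Cs' k)) ->
  (forall k, Cs k = \sum_i T k i *: Cs' i) ->
  hill_rep r Phi (T^T *m H *m map_mx Num.conj T) Cs'.
Proof.
move=> [hH [hCs hPhi]] hT hCs' hsub; split.
  apply: mxF_mul; first (apply: mxF_mul => //; by move=> i j; rewrite mxE).
  by move=> i j; rewrite mxE; apply: inF_conj.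
split=> // V hV; rewrite hPhi //.
have e : forall k l, Cs k *m V *m mxstar (Cs l) =
    \sum_i \sum_j (T k i * (T l j)^*) *: (Cs' i *m V *m mxstar (Cs' j)).
  move=> k l; rewrite !hsub mxstar_sum !mulmx_suml; apply: eq_bigr => i _.
  rewrite mulmx_sumr; apply: eq_bigr => j _.
  by rewrite mxstarZ -!scalemxAl -scalemxAr scalerA.
under eq_bigr do under eq_bigr do rewrite e scaler_sumr; rewrite /=.
under eq_bigr do under eq_bigr do under eq_bigr do rewrite scaler_sumr.
under [RHS]eq_bigr do under eq_bigr do rewrite !mxE scaler_suml.
under [RHS]eq_bigr do under eq_bigr do under eq_bigr do rewrite !mxE mulr_suml scaler_suml.
under eq_bigr do rewrite exchange_big /=.
rewrite exchange_big /=; apply: eq_bigr => i _.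
under eq_bigr do rewrite exchange_big /=.
rewrite exchange_big /=; apply: eq_bigr => j _.
rewrite exchange_big /=; apply: eq_bigr => l _.
apply: eq_bigr => k _.
by rewrite !mxE scalerA; congr (_ *: _); ring.
Qed.

Lemma hill_reduce (C : numClosedFieldType) r n m (Phi : 'M[C]_n -> 'M[C]_n)
    (H : 'M[C]_m.+1) (Cs : 'I_m.+1 -> 'M[C]_n) (c : 'I_m.+1 -> C) (l0 : 'I_m.+1) :
  hill_rep r Phi H Cs -> (forall k, inF r (c k)) ->
  \sum_k c k *: Cs k = 0 -> c l0 != 0 ->
  exists (H' : 'M[C]_m) (Cs' : 'I_m -> 'M[C]_n), hill_rep r Phi H' Cs'.
Proof.
move=> hrep hc hsum hl0.
pose a (i : 'I_m) := - c (lift l0 i) / c l0.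
pose T : 'M[C]_(m.+1, m) := \matrix_(k, i)
  (if unlift l0 k is Some j then (j == i)%:R else a i).
have [hH [hCs _]] := hrep.
exists (T^T *m H *m map_mx Num.conj T), (fun i => Cs (lift l0 i)).
apply: (hill_subst hrep) => //.
- move=> k i; rewrite mxE; case: (unlift l0 k) => [j|]; first exact: inF_nat.
  by rewrite /a; apply: inF_mul; [apply: inF_opp | apply: inF_inv].
- move=> k; case: (unliftP l0 k) => [j ->|->].
    under eq_bigr do rewrite mxE liftK.
    rewrite (bigD1 j) //= eqxx scale1r big1 ?addr0 // => i /negbTE.
    by rewrite eq_sym => ->; rewrite scale0r.
  under eq_bigr do rewrite mxE unlift_none.
  move: hsum; rewrite (bigD1_ord l0) //= => /eqP; rewrite addr_eq0 => /eqP h.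
  apply: (scalerI hl0); rewrite h scaler_sumr -sumrN; apply: eq_bigr => i _.
  by rewrite /a scalerA mulrCA mulfV // mulr1 scaleNr.
Qed.

Lemma hill_indep (C : numClosedFieldType) r n m (Phi : 'M[C]_n -> 'M[C]_n)
    (H : 'M[C]_m) (Cs : 'I_m -> 'M[C]_n) :
  min_hill_rep r Phi H Cs -> forall c : 'I_m -> C, (forall k, inF r (c k)) ->
  \sum_k c k *: Cs k = 0 -> forall k, c k = 0.
Proof.
case: m H Cs => [|m] H Cs [hrep hmin] c hc hs k; first by case: k.
apply/eqP; apply: contraT => hk.
have [H' [Cs' h']] := hill_reduce hrep hc hs hk.
by have := hmin _ _ _ h'; rewrite ltnn.
Qed.

Lemma delta_entry (C : numClosedFieldType) p q s t (X : 'M[C]_(p,q)) (Z : 'M[C]_(s,t)) a b i j :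
  (X *m delta_mx a b *m Z) i j = X i a * Z b j.
Proof.
rewrite -(mul_delta_mx (0 : 'I_1)) mulmxA -colE -mulmxA -rowE mxE big_ord1 !mxE.
by [].
Qed.

Lemma Cs_bicomm (C : numClosedFieldType) r n m (A B : 'M[C]_n) (H : 'M[C]_m)
    (Cs : 'I_m -> 'M[C]_n) :
  bicomm r A B -> min_hill_rep r (lyapAB A B) H Cs -> H \in unitmx ->
  forall k, bicomm r (mxstar A) (Cs k).
Proof.
move=> [hB cB] hmin hH.
have [[hHF [hCs hPhi]] _] := hmin.
have hCsk := hCs.
move=> k; split; first exact: hCs.
move=> Y hY hYA.
have hYB : Y *m mxstar B = mxstar B *m Y.
  have h1 : mxstar Y *m A = A *m mxstar Y.
    by rewrite -[A]mxstarK -!mxstarM hYA.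
  have := cB _ (mxF_star hY) h1.
  by move=> /(congr1 (@mxstar _ _ _)); rewrite !mxstarM !mxstarK.
pose G k := Cs k *m Y - Y *m Cs k.
have hG : forall k, mxF r (G k).
  move=> k'; apply: mxF_add; first exact: mxF_mul.
  by move=> i j; rewrite mxE; apply: inF_opp; apply: mxF_mul.
have key : forall V, mxF r V ->
    \sum_k \sum_l H k l *: (G k *m V *m mxstar (Cs l)) = 0.
  move=> V hV.
  transitivity (lyapAB A B (Y *m V) - lyapAB A B (Y *m V)); last by rewrite subrr.
  rewrite {1}hPhi; last exact: mxF_mul.
  rewrite (@lyapAB_M _ _ A B Y V hYA hYB).
  rewrite hPhi // mulmx_sumr -sumrB; apply: eq_bigr => k' _.
  rewrite mulmx_sumr -sumrB; apply: eq_bigr => l _.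
  by rewrite -scalemxAr -scalerBr /G !mulmxBl !mulmxA.
suff : forall i a, (\row_k G k i a) *m H = 0.
  move=> h; apply/eqP; rewrite -subr_eq0; apply/eqP/matrixP => i a.
  have := h i a; move/(congr1 (mulmx^~ (invmx H))); rewrite mulmxK // mul0mx.
  by move/matrixP => /(_ 0 k); rewrite !mxE.
move=> i a; apply/matrixP => z l; rewrite (ord1 z) !mxE.
pose d l := \sum_k H k l * G k i a.
have hd : forall l, inF r (d l).
  by move=> l'; rewrite /d; apply: inF_sum => k'; apply: inF_mul; [exact: hHF | exact: hG].
have hsum : \sum_l (d l)^* *: Cs l = 0.
  apply: (can_inj (@mxstarK _ _ _)); rewrite mxstar_sum.
  apply/matrixP => b jj.
  have := key _ (@mxF_delta C r n n a b); move/matrixP => /(_ i jj).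
  rewrite !mxE => e; rewrite rmorph0 -e !summxE.
  under [RHS]eq_bigr do rewrite summxE.
  rewrite [RHS]exchange_big /=; apply: eq_bigr => l' _.
  rewrite mxstarZ conjCK mxE /d mulr_suml; apply: eq_bigr => k' _.
  by rewrite [RHS]mxE delta_entry mulrA.
have := hill_indep hmin (fun l => inF_conj (hd l)) hsum l.
move=> /(congr1 Num.conj); rewrite conjCK rmorph0 => e.
rewrite -[RHS]e /d.
by apply: eq_bigr => k' _; rewrite !mxE mulrC.
Qed.

Definition spanC (C : numClosedFieldType) n m (Cs : 'I_m -> 'M[C]_n) (X : 'M[C]_n) : Prop :=
  exists (c : 'I_m -> C) (d : C), X = \sum_k c k *: mxstar (Cs k) + d%:M.

Lemma case1_span (C : numClosedFieldType) r n m (A : 'M[C]_n) (Cs : 'I_m -> 'M[C]_n) :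
  (forall X, bicomm r (mxstar A) X <-> in_span_CI r Cs X) ->
  forall X, bicomm r A X -> spanC Cs X.
Proof.
move=> hiff X /bicomm_star /hiff [c [d [_ [_ e]]]].
exists (fun k => (c k)^*), d^*.
rewrite -[X]mxstarK e mxstarD mxstar_sum mxstar_scalar; congr (_ + _).
by apply: eq_bigr => k _; rewrite mxstarZ.
Qed.

Lemma case1_Cs (C : numClosedFieldType) r n m (A : 'M[C]_n) (Cs : 'I_m -> 'M[C]_n) :
  (forall X, bicomm r (mxstar A) X <-> in_span_CI r Cs X) ->
  forall l, bicomm r A (mxstar (Cs l)).
Proof.
move=> hiff l; apply: bicomm_starK; apply/hiff.
exists (fun k => (k == l)%:R), 0; split; first by move=> k; apply: inF_nat.
split; first exact: inF0.
rewrite (bigD1 l) //= eqxx scale1r big1 ?addr0.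
  by apply/matrixP => i j; rewrite !mxE mul0rn addr0.
by move=> k /negbTE ->; rewrite scale0r.
Qed.

Lemma star_indep (C : numClosedFieldType) r n m (Phi : 'M[C]_n -> 'M[C]_n)
    (H : 'M[C]_m) (Cs : 'I_m -> 'M[C]_n) :
  min_hill_rep r Phi H Cs -> forall v : 'I_m -> C, (forall k, inF r (v k)) ->
  \sum_k v k *: mxstar (Cs k) = 0 -> forall k, v k = 0.
Proof.
move=> hmin v hv hs k.
have hs' : \sum_k (v k)^* *: Cs k = 0.
  rewrite -[LHS]mxstarK mxstar_sum.
  under eq_bigr do rewrite mxstarZ conjCK.
  rewrite hs; apply/matrixP => i j; rewrite !mxE rmorph0 //.
have := hill_indep hmin (fun k => inF_conj (hv k)) hs' k.
by move=> /(congr1 Num.conj); rewrite conjCK rmorph0.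
Qed.

Lemma case2_span (C : numClosedFieldType) r n m (A : 'M[C]_n) (Cs : 'I_m -> 'M[C]_n) :
  dimF_is r (bicomm r A) m -> (forall l, bicomm r A (mxstar (Cs l))) ->
  (forall v : 'I_m -> C, (forall k, inF r (v k)) ->
     \sum_k v k *: mxstar (Cs k) = 0 -> forall k, v k = 0) ->
  forall X, bicomm r A X -> spanC Cs X.
Proof.
move=> [Bs [hBs [hind hspan]]] hCb hCi.
have [f hf] := fin_all_exists (fun k => hspan _ (hCb k)).
pose T : 'M[C]_m := \matrix_(k, j) f k j.
have hTF : mxF r T by move=> k j; rewrite mxE; apply: (proj1 (hf k)).
have key : forall v : 'rV_m, (forall k, inF r (v 0 k)) -> v *m T = 0 -> v = 0.
  move=> v hv hvT; apply/rowP => k; rewrite mxE; apply: (hCi (fun k => v 0 k)) => //.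
  transitivity (\sum_j (v *m T) 0 j *: Bs j); last first.
    by rewrite hvT; apply: big1 => j _; rewrite mxE scale0r.
  under eq_bigr do rewrite (proj2 (hf _)) scaler_sumr.
  rewrite exchange_big; apply: eq_bigr => j _; rewrite mxE scaler_suml.
  by apply: eq_bigr => k' _; rewrite scalerA mxE.
have hTu : T \in unitmx.
  rewrite unitmxE unitfE; apply/negP => /det0P [u hu0 huT].
  move/negP: hu0; apply; apply/eqP.
  case: r hTF key {hBs hind hspan hf hCb hCi} => hTF key; last first.
    by apply: key => // k.
  have hT : forall k j, T k j \is Num.real by move=> k j; have := hTF k j.
  have hRe : map_mx (@Re C) u = 0.
    apply: key; first by move=> k; rewrite mxE /inF /= Creal_Re.
    apply/rowP => j; transitivity ('Re ((u *m T) 0 j)); last by rewrite huT !mxE raddf0.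
    rewrite !mxE raddf_sum; apply: eq_bigr => k _.
    by rewrite mxE /= ReMr // hT.
  have hIm : map_mx (@Im C) u = 0.
    apply: key; first by move=> k; rewrite mxE /inF /= Creal_Im.
    apply/rowP => j; transitivity ('Im ((u *m T) 0 j)); last by rewrite huT !mxE raddf0.
    rewrite !mxE raddf_sum; apply: eq_bigr => k _.
    by rewrite mxE /= ImMr // hT.
  apply/rowP => k; rewrite [u 0 k]Crect.
  move/matrixP: hRe => /(_ 0 k); move/matrixP: hIm => /(_ 0 k); rewrite !mxE => -> ->.
  by rewrite mulr0 addr0.
pose Ti := invmx T.
have hB : forall j, Bs j = \sum_k Ti j k *: mxstar (Cs k).
  move=> j; under eq_bigr do rewrite (proj2 (hf _)) scaler_sumr.
  rewrite exchange_big /=.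
  transitivity (\sum_l (Ti *m T) j l *: Bs l).
    rewrite mulVmx // (bigD1 j) //= mxE eqxx scale1r big1 ?addr0 //.
    by move=> l /negbTE; rewrite mxE eq_sym => ->; rewrite scale0r.
  apply: eq_bigr => l _; rewrite mxE scaler_suml; apply: eq_bigr => k _.
  by rewrite scalerA mxE.
move=> X hX; have [c [_ ->]] := hspan _ hX.
exists (fun k => \sum_j c j * Ti j k), 0.
rewrite raddf0 addr0.
under eq_bigr do rewrite hB scaler_sumr.
rewrite exchange_big; apply: eq_bigr => k _; rewrite scaler_suml.
by apply: eq_bigr => j _; rewrite scalerA.
Qed.

Lemma sum_tens (C : numClosedFieldType) m n (F : 'I_(m * n) -> C) :
  \sum_t F t = \sum_l \sum_b F (mxtens_index (l, b)).
Proof.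
rewrite (reindex (@mxtens_index m n)) /=; last first.
  by exists (@mxtens_unindex m n) => t _; rewrite (mxtens_indexK, mxtens_unindexK).
by rewrite pair_big /=; apply: eq_bigr => -[l b] _.
Qed.

Lemma tens_entry (C : numClosedFieldType) n m (P : 'M[C]_m) (Cs : 'I_m -> 'M[C]_n)
    (R : 'M[C]_n) (y : 'cV[C]_n) i a :
  ((P *t R) *m stackC Cs *m y) (mxtens_index (i, a)) 0 =
  \sum_l P i l * (R *m mxstar (Cs l) *m y) a 0.
Proof.
rewrite -mulmxA mxE sum_tens; apply: eq_bigr => l _.
rewrite -mulmxA mxE mulr_sumr; apply: eq_bigr => b _.
rewrite tensmxE -mulrA; congr (_ * (_ * _)).
by rewrite !mxE; apply: eq_bigr => c _; rewrite !mxE mxtens_indexK.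
Qed.

Lemma sum_col_mx (C : numClosedFieldType) p q s k (F : 'I_k -> 'M[C]_(p, s)) (G : 'I_k -> 'M[C]_(q, s)) :
  \sum_j col_mx (F j) (G j) = col_mx (\sum_j F j) (\sum_j G j).
Proof.
apply: (big_ind3 (fun a b c => a = col_mx b c)) => //.
  by rewrite col_mx0.
by move=> ? ? ? ? ? ? -> ->; rewrite add_col_mx.
Qed.

Lemma T_span (C : numClosedFieldType) n m k (Rs : 'I_k -> 'M[C]_n) (xs : 'I_k -> 'cV[C]_n)
    (Cs : 'I_m -> 'M[C]_n) X :
  spanC Cs X -> \sum_j Rs j *m xs j = 0 ->
  (forall l, \sum_j Rs j *m mxstar (Cs l) *m xs j = 0) ->
  \sum_j Rs j *m X *m xs j = 0.
Proof.
move=> [c [d ->]] h1 hl.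
transitivity (\sum_l c l *: (\sum_j Rs j *m mxstar (Cs l) *m xs j) +
              d *: \sum_j Rs j *m xs j); last first.
  by rewrite h1 scaler0 addr0 big1 // => l _; rewrite hl scaler0.
rewrite scaler_sumr.
under eq_bigr do rewrite mulmxDr mulmxDl mulmx_sumr mulmx_suml mul_mx_scalar -scalemxAl.
rewrite big_split /=; congr (_ + _).
rewrite exchange_big; apply: eq_bigr => l _; rewrite scaler_sumr.
by apply: eq_bigr => j _; rewrite -scalemxAr -scalemxAl.
Qed.

Theorem lemma6p4 (C : numClosedFieldType) (realF : bool) (n m : nat)
    (A B : 'M[C]_n) (H : 'M[C]_m) (Cs : 'I_m -> 'M[C]_n) (P : 'M[C]_m) :
  mxF realF A -> mxF realF B ->
  lyap_regular A ->
  CL realF A B -> bicomm realF A B ->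
  min_hill_rep realF (lyapAB A B) H Cs ->
  mxF realF P -> P \in unitmx -> H = mxstar P *m P ->
  ((forall X, bicomm realF (mxstar A) X <-> in_span_CI realF Cs X) \/
   dimF_is realF (bicomm realF A) m) ->
  forall (k : nat) (Rs : 'I_k -> 'M[C]_n), (forall j, mxF realF (Rs j)) ->
  forall x : 'cV[C]_(\sum_(j < k) n), mxF realF x ->
    LRs P Cs Rs *m x = 0 -> MRs A B P Cs Rs *m x = 0.
Proof.
move=> hAF hBF hreg hCL hbic hmin hPF hPu hHP hcase k Rs hRs x hxF hL.
have hHu : H \in unitmx.
  rewrite hHP unitmx_mul hPu andbT /mxstar unitmxE det_map_mx det_tr unitfE.
  by rewrite conjC_eq0 -unitfE -unitmxE.
have hCb : forall l, bicomm realF A (mxstar (Cs l)).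
  case: hcase => [h|_]; first exact: case1_Cs h.
  by move=> l; apply: bicomm_starK; apply: (Cs_bicomm hbic hmin hHu).
have hspan : forall X, bicomm realF A X -> spanC Cs X.
  case: hcase => [h|h]; first exact: case1_span h.
  by apply: case2_span h hCb _; apply: star_indep hmin.
pose xs j := submxcol (p_ := fun _ : 'I_k => n) x j.
have eL : LRs P Cs Rs *m x = \sum_j LR P Cs (Rs j) *m xs j.
  by rewrite -[x in LHS]submxcolK mul_mxrow_mxcol.
have eM : MRs A B P Cs Rs *m x = \sum_j MR A B P Cs (Rs j) *m xs j.
  by rewrite -[x in LHS]submxcolK mul_mxrow_mxcol.
move: hL; rewrite eM eL.
under eq_bigr do rewrite mul_col_mx.
rewrite sum_col_mx => /eqP; rewrite col_mx_eq0 => /andP [/eqP h1 /eqP h2].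
have hw : forall l, \sum_j Rs j *m mxstar (Cs l) *m xs j = 0.
  pose Wm : 'M[C]_(m, n) := \matrix_(l, a) (\sum_j Rs j *m mxstar (Cs l) *m xs j) a 0.
  have hPW : P *m Wm = 0.
    apply/matrixP => i a; move/matrixP: h2 => /(_ (mxtens_index (i, a)) 0).
    rewrite summxE [RHS]mxE => e; rewrite [RHS]mxE -e.
    under [RHS]eq_bigr do rewrite tens_entry.
    rewrite mxE [RHS]exchange_big /=; apply: eq_bigr => l _.
    by rewrite mxE summxE mulr_sumr.
  have hW0 : Wm = 0 by rewrite -(mulKmx hPu Wm) hPW mulmx0.
  move=> l; apply/matrixP => a z; rewrite (ord1 z).
  by move/matrixP: hW0 => /(_ l a); rewrite !mxE.
under eq_bigr do rewrite mul_col_mx.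
rewrite sum_col_mx; apply/eqP; rewrite col_mx_eq0; apply/andP; split; apply/eqP.
  exact: (T_span (hspan _ hbic) h1 hw).
under eq_bigr do rewrite mulNmx.
rewrite sumrN; apply/eqP; rewrite oppr_eq0; apply/eqP.
apply/matrixP => t z; rewrite (ord1 z); case: (mxtens_indexP t) => i a.
rewrite summxE [RHS]mxE.
under eq_bigr do rewrite tens_entry.
rewrite exchange_big /=; apply: big1 => l _.
have hl : \sum_j Rs j *m (A *m mxstar (Cs l)) *m xs j = 0.
  exact: (T_span (hspan _ (bicomm_mul (bicomm_self hAF) (hCb l))) h1 hw).
transitivity (P i l * (\sum_j Rs j *m (A *m mxstar (Cs l)) *m xs j) a 0).
  by rewrite summxE mulr_sumr; apply: eq_bigr => j _; rewrite !mulmxA.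
by rewrite hl mxE mulr0.
Qed.
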